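(* Let $H$ be a complex Hadamard matrix. Let $\{R,R_1,R_2\}$ be a partition of the set of rows of $H$ and $\{C,C_1,C_2\}$ a partition of the set of columns of $H$, and suppose there is $s\in\mathbb{C}$ such that: (1) every column of the submatrix with rows $R$ and columns $C$ has entry sum $s$; (2) every column of the submatrix with rows $R_1$ and columns $C_1$ has entry sum $-\overline{s}$; (3) the submatrix with rows $R$ and columns $C_1$ and the submatrix with rows $R_1$ and columns $C$ are all-ones matrices; (4) every column of the submatrix with rows $R$ and columns $C_2$, and every column of the submatrix with rows $R_1$ and columns $C_2$, has entry sum $0$. Then for every $z\in\mathbb{T}$, the matrix $K$ obtained from $H$ by multiplying every entry of the submatrix with rows $R_1$ and columns $C_2$ by $z$, and simultaneously every entry of the submatrix with rows $R_2$ and columns $C_1$ by $\overline{z}$ (all other entries unchanged), is a complex Hadamard matrix.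
   Context: $\mathbb{T}$ is the set of complex numbers of modulus $1$. A complex Hadamard matrix of order $n$ is an $n\times n$ matrix with all entries in $\mathbb{T}$ and $HH^{\ast}=nI_n$. *)

(* Defs.v *)
From HB Require Import structures.
From mathcomp Require Import all_boot all_order all_algebra.
From mathcomp Require Import complex.
From mathcomp Require Import reals.
Set Implicit Arguments. Unset Strict Implicit. Unset Printing Implicit Defensive.
Import Order.TTheory GRing.Theory Num.Theory.
Local Open Scope ring_scope.

Definition conj_tr (C : numClosedFieldType) (n : nat) (H : 'M[C]_n) : 'M[C]_n :=
  \matrix_(i, j) (H j i)^*.

Definition complex_hadamard (C : numClosedFieldType) (n : nat) (H : 'M[C]_n) : Prop :=
  (forall i j, `|H i j| = 1) /\ H *m conj_tr H = n%:R%:M.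

Definition partition3 (n : nat) (A B D : {set 'I_n}) : Prop :=
  [/\ A :&: B = set0, A :&: D = set0, B :&: D = set0 & A :|: B :|: D = setT].

Definition twist (C : numClosedFieldType) (n : nat) (H : 'M[C]_n)
  (R1 R2 C1 C2 : {set 'I_n}) (z : C) : 'M[C]_n :=
  \matrix_(i, j)
    if (i \in R1) && (j \in C2) then z * H i j
    else if (i \in R2) && (j \in C1) then z^* * H i j
    else H i j.

(* Main.v *)
Require Import Defs.
From HB Require Import structures.
From mathcomp Require Import all_boot all_order all_algebra.
From mathcomp Require Import complex.
From mathcomp Require Import reals.
From mathcomp Require Import ring.
Import Order.TTheory GRing.Theory Num.Theory.
Local Open Scope ring_scope.
Local Open Scope complex_scope.

Section Aux.
Set Implicit Arguments.
Variable n : nat.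
Implicit Types A B D : {set 'I_n}.

Lemma p3_AB A B D x : partition3 A B D -> x \in A -> x \in B = false.
Proof. rewrite /partition3; case=> h _ _ _ xA; apply/negP=> xB.
have : x \in A :&: B by rewrite inE xA xB. by rewrite h inE. Qed.
Lemma p3_AD A B D x : partition3 A B D -> x \in A -> x \in D = false.
Proof. rewrite /partition3; case=> _ h _ _ xA; apply/negP=> xB.
have : x \in A :&: D by rewrite inE xA xB. by rewrite h inE. Qed.
Lemma p3_BD A B D x : partition3 A B D -> x \in B -> x \in D = false.
Proof. rewrite /partition3; case=> _ _ h _ xA; apply/negP=> xB.
have : x \in B :&: D by rewrite inE xA xB. by rewrite h inE. Qed.
Lemma p3_BA A B D x : partition3 A B D -> x \in B -> x \in A = false.
Proof. move=> p xB; apply/negP=> xA; by rewrite (p3_AB p xA) in xB. Qed.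
Lemma p3_DA A B D x : partition3 A B D -> x \in D -> x \in A = false.
Proof. move=> p xB; apply/negP=> xA; by rewrite (p3_AD p xA) in xB. Qed.
Lemma p3_DB A B D x : partition3 A B D -> x \in D -> x \in B = false.
Proof. move=> p xB; apply/negP=> xA; by rewrite (p3_BD p xA) in xB. Qed.
Lemma p3_cov A B D x : partition3 A B D -> [|| x \in A, x \in B | x \in D].
Proof. rewrite /partition3; case=> _ _ _ h; have : x \in A :|: B :|: D by rewrite h inE.
by rewrite !inE orbA. Qed.

Lemma sum3 (V : nmodType) A B D (F : 'I_n -> V) : partition3 A B D ->
  \sum_i F i = \sum_(i in A) F i + \sum_(i in B) F i + \sum_(i in D) F i.
Proof.
move=> p; rewrite [LHS](bigID (mem A)) /= [X in _ + X = _](bigID (mem B)) /= addrA; congr (_ + _ + _).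
  apply: eq_bigl => i /=; case iB: (i \in B); last by rewrite andbF.
  by rewrite (p3_BA p iB).
apply: eq_bigl => i /=; case iD: (i \in D).
  by rewrite (p3_DA p iD) (p3_DB p iD).
by move: (p3_cov i p); rewrite iD orbF; case: (i \in A); case: (i \in B).
Qed.

Lemma sum_scale (T : comPzRingType) A (f g : 'I_n -> T) c :
  (forall i, i \in A -> f i = c * g i) -> \sum_(i in A) f i = c * \sum_(i in A) g i.
Proof. move=> h; rewrite big_distrr; exact: eq_bigr. Qed.
End Aux.

Lemma unit_swap (R : realType) (n : nat) (M N : 'M[R[i]]_n) :
  M *m N = n%:R%:M -> N *m M = n%:R%:M.
Proof.
case: n M N => [|m] M N h; first by apply/matrixP => i; case: i.
have nz : (m.+1%:R : R[i]) != 0 by rewrite pnatr_eq0.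
have h1 : M *m (m.+1%:R^-1 *: N) = 1%:M.
  by rewrite -scalemxAr h scale_scalar_mx mulVf.
have := mulmx1C h1; rewrite -scalemxAl => h2.
have -> : N *m M = m.+1%:R *: (m.+1%:R^-1 *: (N *m M)).
  by rewrite scalerA mulfV // scale1r.
by rewrite h2 scale_scalar_mx mulr1.
Qed.

Theorem theorem6p7 (R : realType) (n : nat) (H : 'M[R[i]]_n)
  (Rr R1 R2 Cc C1 C2 : {set 'I_n}) (s : R[i]) :
  complex_hadamard H ->
  partition3 Rr R1 R2 -> partition3 Cc C1 C2 ->
  (forall j, j \in Cc -> \sum_(i in Rr) H i j = s) ->
  (forall j, j \in C1 -> \sum_(i in R1) H i j = - s^*) ->
  (forall i j, i \in Rr -> j \in C1 -> H i j = 1) ->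
  (forall i j, i \in R1 -> j \in Cc -> H i j = 1) ->
  (forall j, j \in C2 -> \sum_(i in Rr) H i j = 0) ->
  (forall j, j \in C2 -> \sum_(i in R1) H i j = 0) ->
  forall z : R[i], `|z| = 1 -> complex_hadamard (twist H R1 R2 C1 C2 z).
Proof.
move=> [Hn Hu] pR pC hs hs1 h1a h1b h0 h01 z hz.
have zz : z^* * z = 1 by rewrite -normCKC hz expr1n.
have zz' : z * z^* = 1 by rewrite mulrC.
split.
  move=> i j; rewrite /twist mxE.
  case: ifP => _; first by rewrite normrM hz Hn mulr1.
  case: ifP => _; last exact: Hn.
  by rewrite normrM norm_conjC hz Hn mulr1.
apply: unit_swap; apply/matrixP => j k.
have HuT := unit_swap Hu.
have tot : \sum_i (H i j)^* * H i k = n%:R *+ (j == k).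
  have : (conj_tr H *m H) j k = (n%:R%:M : 'M[R[i]]_n) j k by rewrite HuT.
  rewrite !mxE => <-; apply: eq_bigr => i _; by rewrite mxE.
rewrite !mxE; under eq_bigr => i _ do rewrite [conj_tr _ _ _]mxE.

set S := fun A : {set 'I_n} => \sum_(i in A) (H i j)^* * H i k.
rewrite (sum3 _ _ pR) (sum3 _ _ pR) in tot *.
rewrite (@sum_scale _ _ Rr _ (fun i => (H i j)^* * H i k) 1); last first.
  move=> i iR; rewrite !mxE (p3_AB pR iR) (p3_AD pR iR) /=; ring.
rewrite (@sum_scale _ _ R1 _ (fun i => (H i j)^* * H i k)
   ((if j \in C2 then z else 1)^* * (if k \in C2 then z else 1))); last first.
  move=> i iR; rewrite !mxE iR (p3_BD pR iR) /=.
  by case: (j \in C2); case: (k \in C2); rewrite ?rmorphM ?rmorph1 /=; ring.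
rewrite (@sum_scale _ _ R2 _ (fun i => (H i j)^* * H i k)
   ((if j \in C1 then z^* else 1)^* * (if k \in C1 then z^* else 1))); last first.
  move=> i iR; rewrite !mxE iR (p3_DB pR iR) /=.
  by case: (j \in C1); case: (k \in C1); rewrite ?rmorphM ?rmorph1 /=; ring.
rewrite -/(S Rr) -/(S R1) -/(S R2) in tot *.
have SRc : forall j1 k1, j1 \in Cc -> (forall i, i \in Rr -> H i k1 = 1) ->
    \sum_(i in Rr) (H i j1)^* * H i k1 = s^*.
  move=> j1 k1 jC hk; rewrite (eq_bigr (fun i => (H i j1)^*)) => [|i iR]; last by rewrite hk // mulr1.
  by rewrite -rmorph_sum hs.
have SRc' : forall j1 k1, k1 \in Cc -> (forall i, i \in Rr -> H i j1 = 1) ->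
    \sum_(i in Rr) (H i j1)^* * H i k1 = s.
  move=> j1 k1 kC hk; rewrite (eq_bigr (fun i => H i k1)) => [|i iR]; last by rewrite hk // rmorph1 mul1r.
  by rewrite hs.
have SR1a : forall j1 k1, k1 \in C1 -> (forall i, i \in R1 -> H i j1 = 1) ->
    \sum_(i in R1) (H i j1)^* * H i k1 = - s^*.
  move=> j1 k1 kC hk; rewrite (eq_bigr (fun i => H i k1)) => [|i iR]; last by rewrite hk // rmorph1 mul1r.
  by rewrite hs1.
have SR1a' : forall j1 k1, j1 \in C1 -> (forall i, i \in R1 -> H i k1 = 1) ->
    \sum_(i in R1) (H i j1)^* * H i k1 = - s.
  move=> j1 k1 kC hk; rewrite (eq_bigr (fun i => (H i j1)^*)) => [|i iR]; last by rewrite hk // mulr1.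
  rewrite -rmorph_sum hs1 // rmorphN; congr (- _); exact: conjCK.
have Z1 : forall (A : {set 'I_n}) j1 k1, (forall i, i \in A -> H i j1 = 1) ->
    \sum_(i in A) H i k1 = 0 -> \sum_(i in A) (H i j1)^* * H i k1 = 0.
  move=> A j1 k1 hk e; rewrite (eq_bigr (fun i => H i k1)) => [|i iR]; last by rewrite hk // rmorph1 mul1r.
  by rewrite e.
have Z2 : forall (A : {set 'I_n}) j1 k1, (forall i, i \in A -> H i k1 = 1) ->
    \sum_(i in A) H i j1 = 0 -> \sum_(i in A) (H i j1)^* * H i k1 = 0.
  move=> A j1 k1 hk e; rewrite (eq_bigr (fun i => (H i j1)^*)) => [|i iR]; last by rewrite hk // mulr1.
  by rewrite -rmorph_sum e rmorph0.
have neq : forall (A B : {set 'I_n}), A :&: B = set0 -> j \in A -> k \in B -> (j == k) = false.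
  move=> A B e jA kB; apply/eqP => ejk; move: e jA; rewrite ejk => /setP /(_ k) e jA; move: e.
  by rewrite !inE jA kB.
case: (pC) => dCC1 dCC2 dC1C2 _.
rewrite /S in tot *.
move: (p3_cov j pC) => /or3P [jC|jC|jC]; move: (p3_cov k pC) => /or3P [kC|kC|kC];
  rewrite ?jC ?kC ?(p3_AB pC jC) ?(p3_AD pC jC) ?(p3_BD pC jC) ?(p3_DA pC jC) ?(p3_DB pC jC)
    ?(p3_BA pC jC)
    ?(p3_AB pC kC) ?(p3_AD pC kC) ?(p3_BD pC kC) ?(p3_DA pC kC) ?(p3_DB pC kC) ?(p3_BA pC kC)
    ?rmorph1 ?conjCK ?mul1r ?mulr1 ?zz ?zz' ?mul1r //.
- rewrite (SRc j k jC (fun i iR => h1a i k iR kC)) (SR1a j k kC (fun i iR => h1b i j iR jC)) (neq _ _ dCC1 jC kC) in tot *.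
  rewrite mulr0n addrN add0r in tot; by rewrite tot mulr0 addr0 addrN mulr0n.
- by rewrite (Z1 R1 j k (fun i iR => h1b i j iR jC) (h01 k kC)) mulr0 in tot *.
- rewrite (SRc' j k kC (fun i iR => h1a i j iR jC)) (SR1a' j k jC (fun i iR => h1b i k iR kC)) (neq _ _ (etrans (setIC _ _) dCC1) jC kC) in tot *.
  rewrite mulr0n addrN add0r in tot; by rewrite tot mulr0 addr0 addrN mulr0n.
- rewrite (Z1 Rr j k (fun i iR => h1a i j iR jC) (h0 k kC)) (neq _ _ dC1C2 jC kC) mulr0n !add0r in tot *.
  by rewrite -mulrDr tot mulr0.
- by rewrite (Z2 R1 j k (fun i iR => h1b i k iR kC) (h01 j jC)) mulr0 in tot *.
- rewrite (Z2 Rr j k (fun i iR => h1a i k iR kC) (h0 j jC)) (neq _ _ (etrans (setIC _ _) dC1C2) jC kC) mulr0n !add0r in tot *.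
  by rewrite -mulrDr tot mulr0.
Qed.
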